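(* Let $q$ be a prime power, let $r>0$ be an integer and $B(X)\in\mathbb{F}_{q^3}[X]$. Let $\Gamma$ be the set of roots in $\mathbb{F}_{q^3}$ of $X^{q^2}+X^q+X$ and $\Lambda$ the set of roots in $\mathbb{F}_{q^3}$ of $X^{q+1}+X+1$. Then the following are equivalent: (1) $X^rB(X^{q-1})$ permutes $\Gamma$; (2) $\gcd(r,q-1)=1$ and $X^rB(X)^{q-1}$ permutes $\Lambda$; (3) $\gcd(r,q-1)=1$, $B(X)$ has no roots in $\Lambda$, and the rational function $X^rB^{(q)}(-X^{-1}-1)/B(X)$ permutes $\Lambda$.
   Context: For a polynomial or rational function $g$ over $\overline{\mathbb{F}}_q$, $g^{(q)}$ denotes the function obtained from $g$ by raising each of its coefficients to the $q$-th power. A function ''permutes'' a set $T$ if it maps $T$ bijectively onto $T$. *)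

(* Defs.v *)
From HB Require Import structures.
From mathcomp Require Import all_boot all_order all_algebra all_field.
Set Implicit Arguments. Unset Strict Implicit. Unset Printing Implicit Defensive.
Import GRing.Theory.
Local Open Scope ring_scope.

Definition permutes (F : finType) (f : F -> F) (T : {set F}) : Prop :=
  f @: T = T /\ {in T &, injective f}.

Definition qpow_poly (F : fieldType) (q : nat) (g : {poly F}) : {poly F} :=
  map_poly (fun c => c ^+ q) g.

Definition Gamma_set (F : finFieldType) (q : nat) : {set F} :=
  [set x : F | x ^+ (q ^ 2) + x ^+ q + x == 0].

Definition Lambda_set (F : finFieldType) (q : nat) : {set F} :=
  [set x : F | x ^+ q.+1 + x + 1 == 0].

(* Main.v *)
Require Import Defs.
From HB Require Import structures.
From mathcomp Require Import all_boot all_order all_algebra all_field.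
From mathcomp Require Import all_fingroup all_solvable ring lra zify.
Import GRing.Theory.
Local Open Scope ring_scope.
Set Implicit Arguments. Unset Strict Implicit.

Lemma frob_sum (F : fieldType) (q n : nat) (hq1 : (1 < q)%N)
  (frob : forall x y : F, (x + y) ^+ q = x ^+ q + y ^+ q) (G : 'I_n -> F) :
  (\sum_(i < n) G i) ^+ q = \sum_(i < n) G i ^+ q.
Proof.
apply: (big_morph (fun x : F => x ^+ q)) => //.
by rewrite expr0n; case: q hq1 {frob G}.
Qed.

Lemma horner_q (F : fieldType) (q : nat) (hq1 : (1 < q)%N)
  (frob : forall x y : F, (x + y) ^+ q = x ^+ q + y ^+ q) (B : {poly F}) (x : F) :
  (qpow_poly q B).[x ^+ q] = B.[x] ^+ q.
Proof.
have q0 : (0 : F) ^+ q = 0 by rewrite expr0n; case: q hq1 {frob}.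
rewrite /qpow_poly (@horner_coef_wide _ (size B)); last first.
  by rewrite map_polyE (leq_trans (size_Poly _)) // size_map.
rewrite horner_coef frob_sum //; apply: eq_bigr => i _.
by rewrite coef_map_id0 // exprMn exprAC.
Qed.

Lemma sq_id (q : nat) (hq1 : (1 < q)%N) : (q ^ 2 = (q.-1 * q.+1).+1)%N.
Proof. case: q hq1 => // m _; rewrite /=; lia. Qed.

Lemma powq (F : fieldType) (q : nat) (hq1 : (1 < q)%N) (x : F) :
  x ^+ q = x ^+ q.-1 * x.
Proof. by rewrite -exprSr prednK // ltnW. Qed.

Lemma powq2 (F : fieldType) (q : nat) (hq1 : (1 < q)%N) (x : F) :
  x ^+ (q ^ 2) = (x ^+ q.-1) ^+ q.+1 * x.
Proof. by rewrite -exprM -exprSr -sq_id. Qed.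

Lemma Gam_expand (F : finFieldType) (q : nat) (hq1 : (1 < q)%N) (x : F) :
  x ^+ (q ^ 2) + x ^+ q + x = x * ((x ^+ q.-1) ^+ q.+1 + x ^+ q.-1 + 1).
Proof. rewrite powq2 // (@powq _ _ hq1 x); move: (x ^+ q.-1) => y; move: (y ^+ q.+1) => z; ring. Qed.

Lemma GamP (F : finFieldType) (q : nat) (hq1 : (1 < q)%N) (x : F) :
  x != 0 -> (x \in Gamma_set F q) = (x ^+ q.-1 \in Lambda_set F q).
Proof.
by move=> x0; rewrite !inE Gam_expand // mulf_eq0 (negbTE x0).
Qed.

Lemma Gam_of_Lam (F : finFieldType) (q : nat) (hq1 : (1 < q)%N) (x : F) :
  x ^+ q.-1 \in Lambda_set F q -> x \in Gamma_set F q.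
Proof.
by move=> h; rewrite inE Gam_expand //; move: h; rewrite inE => /eqP ->; rewrite mulr0.
Qed.

Lemma Lam_nz (F : finFieldType) (q : nat) (x : F) : x \in Lambda_set F q -> x != 0.
Proof.
rewrite inE; apply: contraTneq => ->; by rewrite expr0n /= !add0r oner_eq0.
Qed.

Lemma Lam_q (F : finFieldType) (q : nat) (hq1 : (1 < q)%N) (x : F) :
  x \in Lambda_set F q -> x ^+ q = - x^-1 - 1.
Proof.
move=> h; have x0 := @Lam_nz _ _ _ h; move: h; rewrite inE exprSr -addrA addr_eq0 => /eqP e.
by apply: (mulIf x0); rewrite e; field.
Qed.

Lemma prim_exists (F : finFieldType) : exists w : F, (#|F|.-1).-primitive_root w.
Proof.
set rs := enum [set~ (0 : F)].
have szrs : size rs = #|F|.-1 by rewrite -cardE cardsC1.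
have : has (#|F|.-1).-primitive_root rs.
  apply: has_prim_root; last by rewrite szrs.
  - rewrite -szrs -cardE; apply/card_gt0P; exists 1; rewrite !inE oner_eq0 //.
  - apply/allP => x; rewrite mem_enum !inE => x0; rewrite unity_rootE.
    apply/eqP; apply: (mulIf x0); rewrite -exprSr prednK ?expf_card ?mul1r //.
    by apply/card_gt0P; exists x.
  - exact: enum_uniq.
by case/hasP => w _ hw; exists w.
Qed.

Lemma N_id (q : nat) (hq1 : (1 < q)%N) : ((q ^ 3).-1 = q.-1 * (q ^ 2 + q + 1))%N.
Proof. case: q hq1 => // m _; rewrite /= !expnS expn0; nia. Qed.

Lemma Lam_M (F : finFieldType) (q : nat) (hq1 : (1 < q)%N)
  (frob : forall x y : F, (x + y) ^+ q = x ^+ q + y ^+ q)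
  (frobN : forall x : F, (- x) ^+ q = - x ^+ q) (x : F) :
  x \in Lambda_set F q -> x ^+ (q ^ 2 + q + 1) = 1.
Proof.
move=> h; have x0 := @Lam_nz _ _ _ h; have e := @Lam_q _ _ hq1 _ h.
have e2 : x ^+ (q ^ 2) = (- x^-1 - 1) ^+ q by rewrite (expnS q 1) expn1 exprM e.
rewrite !exprD e2 /= expr1 frob !frobN expr1n exprVn e.
have x1 : 1 + x != 0.
  apply: contraTneq h => e1.
  have -> : x = -1 by apply/eqP; rewrite -addr_eq0 addrC e1.
  rewrite inE exprSr -addrA addrC [- 1 + 1]addrC subrr add0r mulrN1.
  by rewrite frobN expr1n opprK oner_eq0.
field; rewrite x0 /=; apply: contraNneq x1 => e3; rewrite -oppr_eq0; apply/eqP; rewrite -e3; ring.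
Qed.

Lemma Lam_pow (F : finFieldType) (q : nat) (hq1 : (1 < q)%N)
  (frob : forall x y : F, (x + y) ^+ q = x ^+ q + y ^+ q)
  (frobN : forall x : F, (- x) ^+ q = - x ^+ q) (hF : #|F| = (q ^ 3)%N) (x : F) :
  x \in Lambda_set F q -> exists y, y ^+ q.-1 = x.
Proof.
move=> h; have x0 := @Lam_nz _ _ _ h.
have [w pw] := prim_exists F.
have xN : x ^+ #|F|.-1 = 1.
  apply: (mulIf x0); rewrite -exprSr prednK ?expf_card ?mul1r //.
  by apply/card_gt0P; exists x.
case: (prim_rootP pw xN) => [[i /= _] ei].
have : (#|F|.-1 %| i * (q ^ 2 + q + 1))%N.
  by rewrite (prim_order_dvd pw) exprM -ei (Lam_M hq1 frob frobN h).
rewrite hF N_id // dvdn_pmul2r ?addn1 // => dv.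
by exists (w ^+ (i %/ q.-1)); rewrite -exprM divnK.
Qed.


Lemma zeta_ex (F : finFieldType) (q : nat) (hq1 : (1 < q)%N) (hF : #|F| = (q ^ 3)%N)
  (d : nat) : (1 < d)%N -> (d %| q.-1)%N -> exists z : F, z != 1 /\ z ^+ d = 1.
Proof.
move=> d1 dq.
have [w pw] := prim_exists F.
have dN : (d %| #|F|.-1)%N by rewrite hF N_id // dvdn_mulr.
have N0 := prim_order_gt0 pw.
move: (#|F|.-1) pw dN N0 => N pw dN N0.
exists (w ^+ (N %/ d)); split.
2: rewrite -exprM.
2: rewrite divnK //.
2: exact: prim_expr_order pw.
rewrite -(prim_order_dvd pw).
apply/negP => hd.
have d0 : (0 < N %/ d)%N by rewrite divn_gt0 ?(ltnW d1) // dvdn_leq.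
have := dvdn_leq d0 hd.
by rewrite leqNgt ltn_Pdiv.
Qed.
Lemma unity_coprime (F : fieldType) (r m : nat) (m0 : (0 < m)%N) (co : coprime r m) (z : F) :
  z ^+ r = 1 -> z ^+ m = 1 -> z = 1.
Proof.
move=> zr zm.
case: (Bezoutl r m0) => a _.
rewrite gcdnC (eqP co) => dv.
have -> : z = z ^+ (1 + a * r) by rewrite exprD expr1 mulnC exprM zr expr1n mulr1.
by rewrite -(divnK dv) mulnC exprM zm expr1n.
Qed.

Lemma Gam_ex (F : finFieldType) (q : nat) (hq1 : (1 < q)%N)
  (frob : forall x y : F, (x + y) ^+ q = x ^+ q + y ^+ q)
  (frobN : forall x : F, (- x) ^+ q = - x ^+ q) (hF : #|F| = (q ^ 3)%N) :
  exists x, x \in Gamma_set F q /\ x != 0.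
Proof.
case: (pickP [pred x | (x \in Gamma_set F q) && (x != 0)]) => [x /andP[]|none].
  by exists x.
have q2 : forall a : F, a ^+ (q ^ 2) = (a ^+ q) ^+ q by move=> a; rewrite (expnS q 1) expn1 exprM.
pose t (a : F) := a ^+ (q ^ 2) + a ^+ q + a.
have tB : forall a b, t (a - b) = t a - t b.
  by move=> a b; rewrite /t !q2 !frob !frobN; ring.
have tinj : injective t.
  move=> a b e; apply/eqP; rewrite -subr_eq0; apply/negPn/negP => nz.
  have := none (a - b); rewrite /= nz andbT inE.
  by rewrite -/(t (a - b)) tB e subrr eqxx.
have tq : forall a, t a ^+ q = t a.
  move=> a; rewrite /t !frob -q2 -exprM -expnSr -hF expf_card.
  by rewrite [RHS]addrC addrA.
pose S := [set b : F | b ^+ q == b].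
have sub : t @: setT \subset S.
  by apply/subsetP => _ /imsetP [a _ ->]; rewrite inE tq.
have cS : (#|S| <= q)%N.
  have szP : size ('X^q - 'X : {poly F}) = q.+1.
    by rewrite size_polyDl ?size_polyXn // size_polyN size_polyX ltnS.
  rewrite cardE -ltnS -szP; apply: max_poly_roots.
  - by rewrite -size_poly_eq0 szP.
  - by apply/allP => b; rewrite mem_enum inE rootE !hornerE subr_eq0.
  - exact: enum_uniq.
have := subset_leq_card sub; rewrite card_imset // cardsT hF => h.
exfalso; move: (leq_trans h cS); rewrite leqNgt -{1}(expn1 q) ltn_exp2l //.
Qed.

Lemma permutes_sub (F : finType) (f : F -> F) (T : {set F}) :
  (forall x, x \in T -> f x \in T) -> {in T &, injective f} -> permutes f T.
Proof.
move=> mp inj; split => //; apply/eqP; rewrite eqEcard; apply/andP; split.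
  by apply/subsetP => _ /imsetP [x xT ->]; apply: mp.
by move/imset_injP: inj => /eqP ->.
Qed.

Lemma permutes_onto (F : finType) (f : F -> F) (T : {set F}) :
  (forall x, x \in T -> f x \in T) -> (forall y, y \in T -> exists2 x, x \in T & f x = y) ->
  permutes f T.
Proof.
move=> mp on.
have e : f @: T = T.
  apply/eqP; rewrite eqEsubset; apply/andP; split.
    by apply/subsetP => _ /imsetP [x xT ->]; apply: mp.
  by apply/subsetP => y /on [x xT <-]; apply: imset_f.
split => //; apply/imset_injP; by rewrite e.
Qed.

Lemma permutes_eq (F : finType) (f g : F -> F) (T : {set F}) :
  {in T, f =1 g} -> permutes f T -> permutes g T.
Proof.
move=> e [p1 p2]; split; first by rewrite -(eq_in_imset e).
by move=> x y xT yT; rewrite -!e //; apply: p2.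
Qed.

Lemma permutes_in (F : finType) (f : F -> F) (T : {set F}) x :
  permutes f T -> x \in T -> f x \in T.
Proof. by case=> e _ xT; rewrite -e imset_f. Qed.

Lemma Gam0 (F : finFieldType) (q : nat) (hq1 : (1 < q)%N) : (0 : F) \in Gamma_set F q.
Proof.
rewrite inE !expr0n !eqn0Ngt expn_gt0 (ltn_trans _ hq1) //= !addr0 //.
Qed.

Lemma fg_eq (F : fieldType) (q r : nat) (B : {poly F}) (x : F) :
  (x ^+ r * B.[x ^+ q.-1]) ^+ q.-1 = (x ^+ q.-1) ^+ r * B.[x ^+ q.-1] ^+ q.-1.
Proof. by rewrite exprMn -!exprM mulnC. Qed.

Lemma f_zeta (F : fieldType) (q r : nat) (B : {poly F}) (x z : F) :
  z ^+ q.-1 = 1 ->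
  (z * x) ^+ r * B.[(z * x) ^+ q.-1] = z ^+ r * (x ^+ r * B.[x ^+ q.-1]).
Proof. by move=> zq; rewrite !exprMn zq mul1r mulrA. Qed.

Lemma dir10 (F : finFieldType) (q r : nat) (hq1 : (1 < q)%N) (hr : (0 < r)%N) (B : {poly F}) :
  coprime r q.-1 ->
  permutes (fun x : F => x ^+ r * B.[x] ^+ q.-1) (Lambda_set F q) ->
  permutes (fun x : F => x ^+ r * B.[x ^+ q.-1]) (Gamma_set F q).
Proof.
move=> co pg.
have q0 : (0 < q.-1)%N by rewrite -ltnS prednK // ltnW.
set f := fun x : F => _.
have key : forall x, x \in Gamma_set F q -> x != 0 -> f x ^+ q.-1 \in Lambda_set F q.
  move=> x xG x0; rewrite /f fg_eq.
  by apply: (permutes_in pg); rewrite -GamP.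
have nz : forall x, x \in Gamma_set F q -> x != 0 -> f x != 0.
  move=> x xG x0; have := Lam_nz (key x xG x0); apply: contraNneq => ->.
  by rewrite expr0n eqn0Ngt q0.
have f0 : f 0 = 0 by rewrite /f expr0n eqn0Ngt hr mul0r.
apply: permutes_sub.
  move=> x xG; have [->|x0] := eqVneq x 0; first by rewrite f0 Gam0.
  by apply: Gam_of_Lam => //; apply: key.
move=> x y xG yG e.
have [x0|x0] := eqVneq x 0.
  by move: e; rewrite x0 f0; have [//|y0] := eqVneq y 0 => /esym/eqP; rewrite (negbTE (nz y yG y0)).
have [y0|y0] := eqVneq y 0.
  by move: e; rewrite y0 f0 => /eqP; rewrite (negbTE (nz x xG x0)).
have exy : x ^+ q.-1 = y ^+ q.-1.
  case: pg => _ inj; apply: inj; rewrite -?GamP //.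
  by rewrite -!fg_eq; congr (_ ^+ _).
pose z := y / x.
have zq : z ^+ q.-1 = 1 by rewrite /z expr_div_n exy divff // expf_neq0.
have yz : y = z * x by rewrite /z divfK.
have zr : z ^+ r = 1.
  apply: (mulIf (nz x xG x0)); rewrite mul1r.
  by rewrite /f -f_zeta // -yz -/(f y) -e.
by rewrite yz (unity_coprime q0 co zr zq) mul1r.
Qed.

Lemma dir01 (F : finFieldType) (q r : nat) (hq1 : (1 < q)%N)
  (frob : forall x y : F, (x + y) ^+ q = x ^+ q + y ^+ q)
  (frobN : forall x : F, (- x) ^+ q = - x ^+ q) (hF : #|F| = (q ^ 3)%N)
  (hr : (0 < r)%N) (B : {poly F}) :
  permutes (fun x : F => x ^+ r * B.[x ^+ q.-1]) (Gamma_set F q) ->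
  coprime r q.-1 /\ permutes (fun x : F => x ^+ r * B.[x] ^+ q.-1) (Lambda_set F q).
Proof.
move=> pf.
have q0 : (0 < q.-1)%N by rewrite -ltnS prednK // ltnW.
set f := fun x : F => _ in pf.
have f0 : f 0 = 0 by rewrite /f expr0n eqn0Ngt hr mul0r.
have nz : forall x, x \in Gamma_set F q -> x != 0 -> f x != 0.
  move=> x xG; apply: contraNneq => e; apply/eqP; case: pf => _ inj; apply: inj => //.
    exact: Gam0.
  by rewrite e f0.
have Lpre : forall l, l \in Lambda_set F q ->
    exists2 y, y \in Gamma_set F q & y != 0 /\ y ^+ q.-1 = l.
  move=> l lL; have [y ey] := Lam_pow hq1 frob frobN hF lL.
  have y0 : y != 0 by apply: contraTneq lL => y0; rewrite -ey y0 expr0n eqn0Ngt q0 /=; apply/negP => /Lam_nz; rewrite eqxx.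
  exists y; last by [].
  by apply: Gam_of_Lam; rewrite // ey.
split.
  apply: contraT => nco.
  have d0 : (0 < gcdn r q.-1)%N by rewrite gcdn_gt0 hr.
  have d1 : (1 < gcdn r q.-1)%N by rewrite ltn_neqAle eq_sym nco d0.
  have [z [z1 zd]] := zeta_ex hq1 hF d1 (dvdn_gcdr _ _).
  have zq : z ^+ q.-1 = 1 by rewrite -(divnK (dvdn_gcdr r q.-1)) mulnC exprM zd expr1n.
  have zr : z ^+ r = 1 by rewrite -(divnK (dvdn_gcdl r q.-1)) mulnC exprM zd expr1n.
  have [x xG x0] : exists2 x, x \in Gamma_set F q & x != 0.
    by have [x [? ?]] := Gam_ex hq1 frob frobN hF; exists x.
  have zxG : z * x \in Gamma_set F q.
    by apply: Gam_of_Lam => //; rewrite exprMn zq mul1r -GamP.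
  have : z * x = x.
    case: pf => _ inj; apply: inj => //.
    by rewrite /f f_zeta // zr mul1r.
  by rewrite -{2}(mul1r x) => /(mulIf x0) /eqP; rewrite (negbTE z1).
apply: permutes_onto.
  move=> l lL; have [y yG [y0 <-]] := Lpre l lL.
  rewrite -fg_eq -GamP ?nz //; first by apply: (permutes_in pf).
move=> l lL; have [y yG [y0 <-]] := Lpre l lL.
have : y \in f @: Gamma_set F q by case: pf => ->.
case/imsetP => z zG ey.
have z0 : z != 0 by apply: contra_neq y0 => z0; rewrite ey z0 f0.
exists (z ^+ q.-1); first by rewrite -GamP.
by rewrite -fg_eq -/(f z) -ey.
Qed.
Lemma q_gt1 (q : nat) (hq : exists p k : nat, [/\ prime p, (0 < k)%N & q = (p ^ k)%N]) : (1 < q)%N.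
Proof.
case: hq => p [k [pp k0 ->]].
apply: leq_trans (prime_gt1 pp) _.
by rewrite -{1}(expn1 p) leq_pexp2l // prime_gt0.
Qed.
Lemma frobq (q : nat) (hq : exists p k : nat, [/\ prime p, (0 < k)%N & q = (p ^ k)%N])
  (F : finFieldType) (hF : #|F| = (q ^ 3)%N) (x y : F) : (x + y) ^+ q = x ^+ q + y ^+ q.
Proof.
case: hq hF => p [k [pp k0 ->]] hF.
have chp : p \in [pchar F] by apply: (card_finPcharP (n := (k * 3)%N)) => //; rewrite expnM.
apply: exprDn_pchar.
by rewrite pnatX (pnatE _ pp) chp.
Qed.

Lemma h_eq (F : finFieldType) (q r : nat) (hq1 : (1 < q)%N)
  (frob : forall x y : F, (x + y) ^+ q = x ^+ q + y ^+ q) (B : {poly F}) (x : F) :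
  x \in Lambda_set F q -> B.[x] != 0 ->
  x ^+ r * (qpow_poly q B).[- x^-1 - 1] / B.[x] = x ^+ r * B.[x] ^+ q.-1.
Proof.
move=> xL b0; rewrite -(Lam_q hq1 xL) horner_q // (powq hq1 B.[x]).
by rewrite mulrA mulfK.
Qed.

Lemma frobNq (q : nat) (hq : exists p k : nat, [/\ prime p, (0 < k)%N & q = (p ^ k)%N])
  (F : finFieldType) (hF : #|F| = (q ^ 3)%N) (x : F) : (- x) ^+ q = - x ^+ q.
Proof.
case: hq hF => p [k [pp k0 ->]] hF.
have chp : p \in [pchar F] by apply: (card_finPcharP (n := (k * 3)%N)) => //; rewrite expnM.
apply: exprNn_pchar.
by rewrite pnatX (pnatE _ pp) chp.
Qed.

Unset Implicit Arguments.

Theorem lemma3p3 (q : nat)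
  (hq : exists p k : nat, [/\ prime p, (0 < k)%N & q = (p ^ k)%N])
  (F : finFieldType) (hF : #|F| = (q ^ 3)%N)
  (r : nat) (hr : (0 < r)%N) (B : {poly F}) :
  [<-> permutes (fun x : F => x ^+ r * B.[x ^+ q.-1]) (Gamma_set F q);
       coprime r q.-1 /\
         permutes (fun x : F => x ^+ r * B.[x] ^+ q.-1) (Lambda_set F q);
       [/\ coprime r q.-1,
           (forall x, x \in Lambda_set F q -> B.[x] != 0) &
           permutes (fun x : F =>
                       x ^+ r * (qpow_poly q B).[- x^-1 - 1] / B.[x])
                    (Lambda_set F q)]].
Proof.
have hq1 := q_gt1 hq.
have frob := frobq hq hF.
have frobN := frobNq hq hF.
have q0 : (0 < q.-1)%N by rewrite -ltnS prednK // ltnW.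
tfae.
- exact: dir01.
- case=> co pg; have bnz : forall x, x \in Lambda_set F q -> B.[x] != 0.
    move=> x xL; have := Lam_nz (permutes_in pg xL).
    by apply: contraNneq => ->; rewrite expr0n eqn0Ngt q0 mulr0.
  split => //; apply: permutes_eq pg => x xL /=.
  by rewrite (h_eq r hq1 frob) ?bnz.
- case=> co bnz ph; apply: dir10 => //; apply: permutes_eq ph => x xL /=.
  by rewrite (h_eq r hq1 frob) ?bnz.
Qed.
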